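(* Let $\Delta$ be a region of $\mathcal{C}_{n,A}$ ($n\ge1$) and let $D_1(\Delta)$ be the Dyck path defined below. Then $\mathrm{level}(\Delta)=\ell(D_1(\Delta))$. Equivalently, for any $\bm x\in\Delta$ with $x_{\pi(1)}>\dots>x_{\pi(n)}$, $\mathrm{level}(\Delta)=1+\#\{k\in[n-1]: x_{\pi(k)}-x_{\pi(k+1)}>a_1\}$.
   Context: Let $A=\{a_1,\dots,a_m\}$ with $a_1>\dots>a_m>0$; $\mathcal{C}_{n,A}$ is the arrangement in $\mathbb{R}^n$ of hyperplanes $x_i-x_j=0$ ($i<j$) and $x_i-x_j=a_k$ ($i\ne j$, $1\le k\le m$); regions are connected components of the complement. The level of $X\subseteq\mathbb{R}^n$ is the smallest integer $\ell\ge0$ such that there are a linear subspace $W$ of dimension $\ell$ and $r>0$ with $X\subseteq\{\bm x:\min_{\bm y\in W}\|\bm x-\bm y\|\le r\}$. For a region $\Delta$, pick $\bm x\in\Delta$ and $\pi\in\mathfrak{S}_n$ with $x_{\pi(1)}>\dots>x_{\pi(n)}$, and let $\alpha_i=\#\{j\in[n]:x_{\pi(i)}-x_{\pi(j)}>a_1\}$ (number of $+$ entries in row $i$ of the sign matrix $(\operatorname{sgn}(x_{\pi(i)}-x_{\pi(j)}-a_1))_{i,j}$); then $\alpha_1\ge\dots\ge\alpha_n=0$ and $\alpha_i\le n-i$, and these numbers do not depend on the choice of $\bm x\in\Delta$. $D_1(\Delta)$ is the lattice path from $(0,n)$ to $(n,0)$ with steps $E=(1,0)$, $S=(0,-1)$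 given by $E^{n-\alpha_1}SE^{\alpha_1-\alpha_2}S\cdots E^{\alpha_{n-1}-\alpha_n}S$; it is a Dyck path (stays weakly above the line $y=n-x$). For a Dyck path $D$ from $(0,n)$ to $(n,0)$, $\ell(D)$ is its number of prime components, i.e. the number of $k\in\{1,\dots,n\}$ such that $D$ passes through the point $(k,n-k)$. *)

(* Defs.v *)
From HB Require Import structures.
From mathcomp Require Import all_boot all_order all_algebra all_fingroup.
From mathcomp Require Import all_classical all_reals all_analysis.
Unset Printing Implicit Defensive.
Import Order.TTheory GRing.Theory Num.Theory.
Import numFieldNormedType.Exports.
Local Open Scope classical_set_scope.
Local Open Scope ring_scope.

(* The set A = {a_1 > ... > a_m > 0} is given as a seq A = [:: a_1; ...; a_m];
   a_1 is its head. *)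
Definition a1 {R : realType} (A : seq R) : R := head 0 A.

Definition arr_compl {R : realType} (n : nat) (A : seq R) : set 'rV[R]_n :=
  [set x | forall i j : 'I_n,
      ((i < j)%N -> x ord0 i - x ord0 j != 0) /\
      (i != j -> forall a, a \in A -> x ord0 i - x ord0 j != a)].

Definition is_region {R : realType} (n : nat) (A : seq R) (D : set 'rV[R]_n) :=
  exists2 x, arr_compl n A x & D = connected_component (arr_compl n A) x.

(* X lies within (Euclidean) distance r of some linear subspace of dimension l,
   i.e. X is contained in a tube {x : min_{y in W} ||x - y|| <= r}, r > 0.
   (The minimum over the closed subspace W is attained, so it is <= r iff
   some y in W has ||x - y|| <= r; we compare squared norms.) *)
Definition within_tube {R : realType} (n : nat) (X : set 'rV[R]_n) (l : nat) :=
  exists W : {vspace 'rV[R]_n}, \dim W = l /\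
    exists2 r : R, 0 < r &
      forall x, X x -> exists2 y, y \in W &
        \sum_(i < n) (x ord0 i - y ord0 i) ^+ 2 <= r ^+ 2.

Definition level {R : realType} (n : nat) (X : set 'rV[R]_n) (l : nat) :=
  within_tube n X l /\ forall l', within_tube n X l' -> (l <= l')%N.

(* alpha_i (for 0-indexed i, i.e. alpha_{i+1} of the paper) for a point x
   and a permutation pi with x_{pi(1)} > ... > x_{pi(n)}. *)
Definition alpha {R : realType} (n : nat) (A : seq R) (x : 'rV[R]_n)
    (pi : 'S_n) (i : 'I_n) : nat :=
  #|[pred j : 'I_n | a1 A < x ord0 (pi i) - x ord0 (pi j)]|.

(* Lattice paths are seq bool: true = E = (1,0), false = S = (0,-1). *)
(* D_1 = E^{n-alpha_1} S E^{alpha_1-alpha_2} S ... E^{alpha_{n-1}-alpha_n} S. *)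
Definition D1 {R : realType} (n : nat) (A : seq R) (x : 'rV[R]_n) (pi : 'S_n)
    : seq bool :=
  flatten [seq nseq d true ++ [:: false]
          | d <- pairmap subn n [seq alpha n A x pi i | i <- enum 'I_n]].

(* The path from (0,n) after the prefix take i D is at
   (#E in prefix, n - #S in prefix); it passes through (k, n-k) iff some
   prefix has exactly k E-steps and k S-steps. *)
Definition passes_through (D : seq bool) (k : nat) : bool :=
  [exists i : 'I_(size D).+1,
     (count id (take i D) == k) && (count negb (take i D) == k)].

Definition ell (n : nat) (D : seq bool) : nat :=
  #|[pred k : 'I_n.+1 | (0 < k)%N && passes_through D k]|.

(* Main.v *)
Require Import Defs.
From HB Require Import structures.
From mathcomp Require Import all_boot all_order all_algebra all_fingroup.
From mathcomp Require Import all_classical all_reals all_analysis.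
From mathcomp Require Import ring lra zify.
Import Order.TTheory GRing.Theory Num.Theory.
Import numFieldNormedType.Exports.
Local Open Scope classical_set_scope.
Local Open Scope ring_scope.
Lemma sign_invariant (R : realType) (N : nat) (D : set 'rV[R]_N) (x y : 'rV[R]_N)
  (f : 'rV[R]_N -> R) : connected D -> D x -> D y -> continuous f ->
  (forall z, D z -> f z != 0) -> 0 < f x -> 0 < f y.
Proof.
move=> cD Dx Dy cf nz fx0; rewrite lt_neqAle eq_sym nz //=.
rewrite leNgt; apply/negP => fy0.
have ci : connected (f @` D) by apply: connected_continuous_connected => //; exact: continuous_subspaceT.
move/connected_intervalP: ci => /(_ (f y) (f x)) H.
have [z Dz fz] : (f @` D) 0 by apply: H; [exists y|exists x|rewrite !ltW].
by move: (nz z Dz); rewrite fz eqxx.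
Qed.

Lemma coordB_continuous (R : realType) (N : nat) (i j : 'I_N) (a : R) :
  continuous (fun y : 'rV[R]_N => y ord0 i - y ord0 j - a).
Proof.
move=> y; apply: (@continuousB _ _ _ (fun y : 'rV[R]_N => y ord0 i - y ord0 j) (fun=> a)); last exact: cst_continuous.
apply: (@continuousB _ _ _ (fun y : 'rV[R]_N => y ord0 i) (fun y : 'rV[R]_N => y ord0 j)); exact: coord_continuous.
Qed.

Lemma a1_in (R : realType) (A : seq R) : A != [::] -> a1 A \in A.
Proof. by case: A => //= a A' _; rewrite inE eqxx. Qed.

Lemma inv_lt (R : realType) (N : nat) (A : seq R) (D : set 'rV[R]_N) (x y : 'rV[R]_N)
  (i j : 'I_N) : connected D -> D `<=` arr_compl N A -> D x -> D y -> a1 A \in A ->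
  i != j -> x ord0 i - x ord0 j < a1 A -> y ord0 i - y ord0 j < a1 A.
Proof.
move=> cD DC Dx Dy aA ij hx.
have H := @sign_invariant R N D x y _ cD Dx Dy (@coordB_continuous R N j i (- a1 A)).
have : 0 < y ord0 j - y ord0 i - - a1 A.
  apply: H; last by lra.
  move=> z /DC /(_ i j) [_ /(_ ij (a1 A) aA)].
  by apply: contra => /eqP H0; apply/eqP; lra.
lra.
Qed.

Lemma segment_in (R : realType) (N : nat) (A : seq R) (D : set 'rV[R]_N) (x w : 'rV[R]_N)
  : is_region N A D -> D x -> (forall t, 0 <= t -> arr_compl N A (x - t *: w)) ->
  forall t, 0 <= t -> D (x - t *: w).
Proof.
move=> [x0 _ ->] Dx hC t t0.
rewrite (same_connected_component Dx).
have cg : continuous (fun s : R => x - s *: w).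
  move=> s; apply: (@continuousB _ _ _ (fun=> x) (fun s : R => s *: w)); first exact: cst_continuous.
  by apply: continuousZr_tmp; exact: id.
pose B := (fun s : R => x - s *: w) @` `[0, t].
have Bx : B x by exists 0; [rewrite /= in_itv /= lexx t0|rewrite scale0r subr0].
have BC : B `<=` arr_compl N A.
  by move=> z [s]; rewrite /= in_itv /= => /andP[s0 _] <-; exact: hC.
have cB : connected B.
  apply: connected_continuous_connected; first exact: segment_connected.
  exact: continuous_subspaceT.
apply: (connected_component_max Bx BC cB).
by exists t => //; rewrite /= in_itv /= lexx t0.
Qed.

Local Open Scope nat_scope.
Definition Pth (ds : seq nat) : seq bool :=
  flatten [seq nseq d true ++ [:: false] | d <- ds].
Definition pre (ds : seq nat) (k e : nat) := exists i, (i <= size (Pth ds))%N /\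
  count id (take i (Pth ds)) = e /\ count negb (take i (Pth ds)) = k.

Lemma take_blk d s i : take i (nseq d true ++ false :: s) =
  if (i <= d)%N then nseq i true else nseq d true ++ false :: take (i - d.+1) s.
Proof.
elim: d i => [|d IH] [|i] //=; first by rewrite subSS subn0.
by rewrite IH ltnS subSS; case: ifP.
Qed.

Lemma PthE d ds : Pth (d :: ds) = nseq d true ++ false :: Pth ds.
Proof. by rewrite /Pth /= -catA. Qed.

Lemma pre_nil k e : pre [::] k e <-> k = 0%N /\ e = 0%N.
Proof.
split; first by move=> [[|i] [_ [<- <-]]].
by move=> [-> ->]; exists 0%N.
Qed.

Lemma pre_cons d ds k e : pre (d :: ds) k e <->
  (if k is k'.+1 then (d <= e)%N /\ pre ds k' (e - d) else (e <= d)%N).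
Proof.
rewrite /pre PthE size_cat size_nseq /=; split.
- move=> [i [hi [he hk]]]; move: he hk; rewrite take_blk; case: ifP => hid.
  + by rewrite !count_nseq /= mul1n mul0n => <- <-.
  + rewrite !count_cat !count_nseq /= mul1n mul0n add0n => <- <-.
    split; first exact: leq_addr.
    exists (i - d.+1); split; first lia.
    by rewrite addKn.
- case: k => [he | k [hde [j [hj [he hk]]]]].
  + exists e; split; first lia.
    by rewrite take_blk he !count_nseq /= mul1n mul0n.
  + exists (d + j.+1); split; first lia.
    rewrite take_blk ifF; last lia.
    have -> : (d + j.+1 - d.+1 = j)%N by lia.
    by rewrite !count_cat !count_nseq /= mul1n mul0n add0n he hk; split => //; lia.
Qed.

Lemma geq_trans : transitive geq.
Proof. by move=> a b c /= h1 h2; apply: leq_trans h2 h1. Qed.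

Lemma path_geq_nth {a s} : path geq a s -> forall i, (nth 0 s i <= a)%N.
Proof.
move=> /(order_path_min geq_trans) /(all_nthP 0) H i.
case: (ltnP i (size s)) => hi; first exact: H.
by rewrite nth_default.
Qed.

Lemma pre_pairmap (s : seq nat) : forall m k e, path geq m s -> last m s = 0%N ->
  pre (pairmap subn m s) k.+1 e <->
  [/\ (k < size s)%N, (nth 0 s k.+1 + e <= m)%N & (m <= nth 0 s k + e)%N].
Proof.
elim: s => [|a s IH] m k e.
  move=> _ /= m0; rewrite pre_nil; split => [[]|[]] //.
move=> /= /andP[am ps] la; rewrite pre_cons.
have hn := path_geq_nth ps.
case: k => [|k].
- case: s IH ps la hn => [|b s] IH ps la hn.
  + rewrite pre_nil /=; rewrite /= in la; subst a; split; [move=> [h1 [h2 h3]]; split; lia| move=>[_ h1 h2]; split; lia].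
  + rewrite /= pre_cons /=; have := hn 0%N; rewrite /= => hb.
    split; [move=> [h1 h2]; split; lia| move=>[_ h1 h2]; split; lia].
- rewrite IH //; have := hn k; rewrite /= => hk.
  split; [move=> [h1 [h2 h3 h4]]; split; lia| move=>[h2 h3 h4]; split; [lia|split; lia]].
Qed.

Lemma card_gt N k : #|[pred j : 'I_N | k < j]| = N - k.+1.
Proof.
rewrite -sum1_card big_mkcond /=.
elim: N => [|N IH]; first by rewrite big_ord0.
rewrite big_ord_recr /= IH inE /=; case: ltnP => ?; lia.
Qed.

Local Open Scope ring_scope.

Definition Xc {R : realType} {n} (x : 'rV[R]_n.+1) (pi : 'S_n.+1) (k : nat) : R :=
  x ord0 (pi (inord k)).

Definition fa {R : realType} {n} (A : seq R) (x : 'rV[R]_n.+1) (pi : 'S_n.+1) (k : nat) : nat :=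
  alpha n.+1 A x pi (inord k).

Lemma hpi_nat (R : realType) (n : nat) (x : 'rV[R]_n.+1) (pi : 'S_n.+1)
  (hpi : forall i j : 'I_n.+1, (i < j)%N -> x ord0 (pi j) < x ord0 (pi i)) :
  forall j k, (j < k)%N -> (k <= n)%N -> Xc x pi k < Xc x pi j.
Proof.
move=> j k jk kn; apply: hpi; rewrite !inordK //; lia.
Qed.

Arguments hpi_nat {R n x pi} hpi.

Lemma hpi_le (R : realType) (n : nat) (x : 'rV[R]_n.+1) (pi : 'S_n.+1)
  (hpi : forall i j : 'I_n.+1, (i < j)%N -> x ord0 (pi j) < x ord0 (pi i)) :
  forall j k, (j <= k)%N -> (k <= n)%N -> Xc x pi k <= Xc x pi j.
Proof.
move=> j k; rewrite leq_eqVlt => /orP[/eqP -> //|jk] kn.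
by apply: ltW; apply: hpi_nat.
Qed.
Arguments hpi_le {R n x pi} hpi.

Lemma fa_bound (R : realType) n (A : seq R) (x : 'rV[R]_n.+1) (pi : 'S_n.+1)
  (hpi : forall i j : 'I_n.+1, (i < j)%N -> x ord0 (pi j) < x ord0 (pi i))
  (ha : 0 < a1 A) k : (k <= n)%N -> (fa A x pi k + k.+1 <= n.+1)%N.
Proof.
move=> kn; rewrite /fa /alpha.
have : leq #|[pred j : 'I_n.+1 | a1 A < x ord0 (pi (inord k)) - x ord0 (pi j)]|
   #|[pred j : 'I_n.+1 | (k < j)%N]|.
  apply: subset_leq_card; apply/fintype.subsetP => j; rewrite !inE => h.
  rewrite ltnNge; apply/negP => jk.
  have := hpi_le hpi _ _ jk kn; rewrite /Xc inord_val => h2.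
  move: h; rewrite ltNge; move/negP; apply; apply: le_trans (ltW ha).
  by rewrite subr_le0.
rewrite card_gt; lia.
Qed.

Lemma fa_gap (R : realType) n (A : seq R) (x : 'rV[R]_n.+1) (pi : 'S_n.+1)
  (hpi : forall i j : 'I_n.+1, (i < j)%N -> x ord0 (pi j) < x ord0 (pi i))
  k : (k < n)%N -> a1 A < Xc x pi k - Xc x pi k.+1 -> (n.+1 <= fa A x pi k + k.+1)%N.
Proof.
move=> kn hg; rewrite /fa /alpha.
have : leq #|[pred j : 'I_n.+1 | (k < j)%N]|
  #|[pred j : 'I_n.+1 | a1 A < x ord0 (pi (inord k)) - x ord0 (pi j)]|.
  apply: subset_leq_card; apply/fintype.subsetP => j; rewrite !inE => h.
  have := hpi_le hpi _ _ h (ltn_ord j : (j <= n)%N); rewrite /Xc inord_val => h2.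
  rewrite /Xc in hg; lra.
rewrite card_gt; lia.
Qed.

Lemma fa_nogap (R : realType) n (A : seq R) (x : 'rV[R]_n.+1) (pi : 'S_n.+1)
  (hpi : forall i j : 'I_n.+1, (i < j)%N -> x ord0 (pi j) < x ord0 (pi i))
  (ha : 0 < a1 A) k : (k < n)%N -> ~~ (a1 A < Xc x pi k - Xc x pi k.+1) ->
  (fa A x pi k + k.+2 <= n.+1)%N.
Proof.
move=> kn hg; rewrite /fa /alpha.
have : leq #|[pred j : 'I_n.+1 | a1 A < x ord0 (pi (inord k)) - x ord0 (pi j)]|
   #|[pred j : 'I_n.+1 | (k.+1 < j)%N]|.
  apply: subset_leq_card; apply/fintype.subsetP => j; rewrite !inE => h.
  rewrite ltnNge; apply/negP => jk.
  case: (ltngtP j k.+1) jk => // [jk _|jk _].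
  - have := hpi_le hpi _ _ (jk : (j <= k)%N) (ltnW kn); rewrite /Xc inord_val => h2.
    move: h; rewrite ltNge; move/negP; apply; apply: le_trans (ltW ha).
    by rewrite subr_le0.
  - move: hg h; rewrite /Xc -jk inord_val => hg h; by rewrite h in hg.
rewrite card_gt; lia.
Qed.

Lemma fa_mono (R : realType) n (A : seq R) (x : 'rV[R]_n.+1) (pi : 'S_n.+1)
  (hpi : forall i j : 'I_n.+1, (i < j)%N -> x ord0 (pi j) < x ord0 (pi i))
  k : (k < n)%N -> (fa A x pi k.+1 <= fa A x pi k)%N.
Proof.
move=> kn; rewrite /fa /alpha; apply: subset_leq_card; apply/fintype.subsetP => j; rewrite !inE => h.
have := hpi_nat hpi _ _ (ltnSn k) kn; rewrite /Xc => h2.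
apply: lt_le_trans h _; lra.
Qed.

Lemma card_sum (T : finType) (P : pred T) : #|P| = (\sum_(i : T) nat_of_bool (P i))%N.
Proof. by rewrite -sum1_card big_mkcond /=; apply: eq_bigr => i _; rewrite unfold_in; case: (P i). Qed.

Lemma passes_pre ds k : passes_through (Pth ds) k <-> pre ds k k.
Proof.
split.
- move=> /existsP [i /andP[/eqP h1 /eqP h2]]; exists i; split => //.
  by rewrite -ltnS ltn_ord.
- move=> [i [hi [h1 h2]]]; apply/existsP; exists (Ordinal (hi : (i < (size (Pth ds)).+1)%N)).
  by rewrite /= h1 h2 !eqxx.
Qed.

Lemma al_mk (R : realType) n (A : seq R) (x : 'rV[R]_n.+1) (pi : 'S_n.+1) :
  [seq alpha n.+1 A x pi i | i <- enum 'I_n.+1] = mkseq (fa A x pi) n.+1.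
Proof.
rewrite /mkseq -val_enum_ord -map_comp; apply: eq_map => i /=.
by rewrite /fa inord_val.
Qed.

Lemma path_mk (f : nat -> nat) a i m : (f i <= a)%N ->
  (forall j, (i <= j)%N -> (j.+1 < i + m)%N -> (f j.+1 <= f j)%N) ->
  path geq a (map f (iota i m)).
Proof.
elim: m i a => [|m IH] i a //= hfa hm.
rewrite hfa /=; case: m IH hm => [|m] IH hm //; apply: IH.
  by apply: hm => //; lia.
move=> j hj hj2; apply: hm; lia.
Qed.

Lemma D1E (R : realType) n (A : seq R) (x : 'rV[R]_n) (pi : 'S_n) :
  D1 n A x pi = Pth (pairmap subn n [seq alpha n A x pi i | i <- enum 'I_n]).
Proof. by []. Qed.

Lemma passes_iff (R : realType) n (A : seq R) (x : 'rV[R]_n.+1) (pi : 'S_n.+1)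
  (hpi : forall i j : 'I_n.+1, (i < j)%N -> x ord0 (pi j) < x ord0 (pi i))
  (ha : 0 < a1 A) k : (k <= n)%N ->
  passes_through (D1 n.+1 A x pi) k.+1 <-> ((k == n) || (a1 A < Xc x pi k - Xc x pi k.+1)).
Proof.
move=> kn.
have FB := @fa_bound R n A x pi hpi ha.
rewrite D1E al_mk passes_pre pre_pairmap; first last.
- rewrite -nth_last size_mkseq nth_mkseq //=.
  have := FB n (leqnn n); lia.
- rewrite /mkseq; apply: path_mk.
    have := FB 0%N (leq0n n); lia.
  move=> j _ hj; apply: (@fa_mono R n A x pi hpi); lia.
have E : forall j, (j <= n)%N -> nth 0%N (mkseq (fa A x pi) n.+1) j = fa A x pi j.
  by move=> j hj; rewrite nth_mkseq.
rewrite size_mkseq (E k kn).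
have hb := FB k kn.
case: (ltngtP k n) kn => // [kn _|-> _]; last first.
  rewrite nth_default ?size_mkseq //; split => // _; split => //; lia.
rewrite (E k.+1 kn) ?(ltn_eqF kn) /=.
have hb2 := FB k.+1 kn.
split.
- move=> [_ _ h3]; apply: contraLR h3 => hg; rewrite -ltnNge.
  have := @fa_nogap R n A x pi hpi ha k kn hg; lia.
- move=> hg; split; [lia | lia | exact: (@fa_gap R n A x pi hpi k kn hg)].
Qed.

Lemma ell_count (R : realType) n (A : seq R) (x : 'rV[R]_n.+1) (pi : 'S_n.+1)
  (hpi : forall i j : 'I_n.+1, (i < j)%N -> x ord0 (pi j) < x ord0 (pi i))
  (ha : 0 < a1 A) :
  ell n.+1 (D1 n.+1 A x pi) = addn 1 #|[pred k : 'I_n.+1 | [exists k' : 'I_n.+1,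
                    (k'.+1 == k :> nat) &&
                    (a1 A < x ord0 (pi k') - x ord0 (pi k))]]|.
Proof.
have PI : forall i : 'I_n.+1, passes_through (D1 n.+1 A x pi) i.+1 =
    (i == n :> nat) || (a1 A < Xc x pi i - Xc x pi i.+1).
  move=> i; apply/idP/idP.
  - by move/(@passes_iff R n A x pi hpi ha i (ltn_ord i : (i <= n)%N)).
  - by move=> h; apply/(@passes_iff R n A x pi hpi ha i (ltn_ord i : (i <= n)%N)).
rewrite /ell !card_sum [in LHS]big_ord_recl /= add0n [in RHS]big_ord_recl /=.
have -> : [exists k' : 'I_n.+1, (k'.+1 == 0%N) && (a1 A < x ord0 (pi k') - x ord0 (pi ord0))] = false.
  by apply/existsP => -[k' /andP[]].
rewrite add0n.
under eq_bigr => i _ do rewrite /bump /= add1n PI.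
rewrite big_ord_recr /= eqxx /= addn1 add1n; congr S.
apply: eq_bigr => i _.
rewrite (ltn_eqF (ltn_ord i)) /=.
have E2 : (inord i.+1 : 'I_n.+1) = lift ord0 i.
  apply: val_inj => /=; rewrite inordK; first by rewrite /bump /= add1n. have := ltn_ord i; lia.
have E1 : nat_of_ord (inord i : 'I_n.+1) = i.
  rewrite inordK //; have := ltn_ord i; lia.
congr nat_of_bool; apply/idP/idP.
- move=> h; apply/existsP; exists (inord i); rewrite E1.
  rewrite /bump /= add1n eqxx /=; move: h; by rewrite /Xc E2.
- move=> /existsP [k' /andP [/eqP hk h]]; move: h; rewrite /bump /= add1n in hk.
  rewrite /Xc E2.
  have -> : (inord i : 'I_n.+1) = k' by apply: val_inj => /=; rewrite E1; lia.
  done.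
Qed.

Definition dotv {R : realType} {N : nat} (u v : 'rV[R]_N) : R :=
  \sum_(i < N) u ord0 i * v ord0 i.

Lemma sum_coord (R : realType) N (I : finType) (P : pred I) (c : I -> R)
  (v : I -> 'rV[R]_N) i :
  (\sum_(k | P k) c k *: v k) ord0 i = \sum_(k | P k) c k * v k ord0 i.
Proof. by rewrite summxE; apply: eq_bigr => k _; rewrite mxE. Qed.

Lemma dot_suml (R : realType) N (I : finType) (P : pred I) (c : I -> R)
  (v : I -> 'rV[R]_N) w :
  dotv (\sum_(k | P k) c k *: v k) w = \sum_(k | P k) c k * dotv (v k) w.
Proof.
rewrite /dotv; under eq_bigr => i _ do rewrite sum_coord mulr_suml.
rewrite exchange_big /=; apply: eq_bigr => k _; rewrite mulr_sumr.
by apply: eq_bigr => i _; rewrite mulrA.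
Qed.

Lemma dotC (R : realType) N (u v : 'rV[R]_N) : dotv u v = dotv v u.
Proof. by apply: eq_bigr => i _; rewrite mulrC. Qed.

Lemma dotB (R : realType) N (u v w : 'rV[R]_N) : dotv u (v - w) = dotv u v - dotv u w.
Proof.
rewrite /dotv -sumrB; apply: eq_bigr => i _; rewrite !mxE; ring.
Qed.

Lemma dot_self_eq0 (R : realType) N (u : 'rV[R]_N) : dotv u u = 0 -> u = 0.
Proof.
move=> h; apply/rowP => i; rewrite mxE.
have : u ord0 i * u ord0 i == 0.
  move: h; rewrite /dotv => /eqP; rewrite psumr_eq0.
    by move=> /allP /(_ i); rewrite mem_index_enum => /(_ isT).
  by move=> j _; rewrite -expr2 sqr_ge0.
by rewrite mulf_eq0 orbb => /eqP.
Qed.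

Lemma coord_le (R : realType) N (v : 'rV[R]_N) r i : 0 < r ->
  \sum_(j < N) (v ord0 j) ^+ 2 <= r ^+ 2 -> `|v ord0 i| <= r.
Proof.
move=> r0 h.
have : (v ord0 i) ^+ 2 <= r ^+ 2.
  apply: le_trans h; rewrite (bigD1 i) //= lerDl; apply: sumr_ge0 => j _; exact: sqr_ge0.
move=> h2; have e : `|v ord0 i| ^+ 2 = v ord0 i ^+ 2 by rewrite real_normK ?num_real.
have n0 : 0 <= `|v ord0 i| by [].
rewrite leNgt; apply/negP => hlt; nra.
Qed.

Lemma dot_bound (R : realType) N (u v : 'rV[R]_N) r : 0 < r ->
  \sum_(j < N) (v ord0 j) ^+ 2 <= r ^+ 2 ->
  `|dotv u v| <= (\sum_(j < N) `|u ord0 j|) * r.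
Proof.
move=> r0 h; rewrite /dotv mulr_suml; apply: le_trans (ler_norm_sum _ _ _) _.
apply: ler_sum => j _; rewrite normrM; apply: ler_wpM2l => //.
exact: coord_le.
Qed.

Definition wvec {R : realType} {N : nat} (pi : 'S_N) (s : 'I_N) : 'rV[R]_N :=
  \row_i (if (s <= (pi^-1)%g i)%N then 1 else 0).

Lemma wvec_pi (R : realType) N (pi : 'S_N) (s p : 'I_N) :
  (wvec pi s : 'rV[R]_N) ord0 (pi p) = if (s <= p)%N then 1 else 0.
Proof. by rewrite mxE permK. Qed.

Lemma ord_lt_trans N : transitive (fun a b : 'I_N => (a < b)%N).
Proof. by move=> a b c h1 h2; apply: ltn_trans h1 h2. Qed.

Lemma free_w (R : realType) N (pi : 'S_N) (L : seq 'I_N) :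
  sorted (fun a b : 'I_N => (a < b)%N) L -> free (map (@wvec R N pi) L).
Proof.
elim: L => [|s L IH] /=; first by rewrite /free span_nil dimv0.
move=> hp; rewrite free_cons IH ?(path_sorted hp) // andbT.
have hall := order_path_min (@ord_lt_trans N) hp.
apply/negP => hin; have := @coord_span _ _ _ (in_tuple (map (@wvec R N pi) L)) _ hin.
move=> /(congr1 (fun v : 'rV[R]_N => v ord0 (pi s))).
rewrite wvec_pi leqnn sum_coord big1 => [|i _]; first by move/eqP; rewrite oner_eq0.
have hi : (i < size L)%N by rewrite -(size_map (@wvec R N pi)); exact: ltn_ord.
rewrite (nth_map s) // wvec_pi.
have : (nth s L i \in L) by rewrite mem_nth.
move/(allP hall) => /= hs; rewrite leqNgt hs /= mulr0 //.
Qed.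

Lemma sorted_enum_ord N (S : pred 'I_N) : sorted (fun a b : 'I_N => (a < b)%N) (enum S).
Proof.
rewrite -(@sorted_map _ _ val ltn) /enum_mem -enumT.
apply: (subseq_sorted ltn_trans (map_subseq val (filter_subseq _ _))).
by rewrite val_enum_ord iota_ltn_sorted.
Qed.

Lemma A_bounds (R : realType) (A : seq R) :
  sorted (fun a b => b < a) A -> all (fun a => 0 < a) A ->
  forall a, a \in A -> 0 < a /\ a <= a1 A.
Proof.
move=> hs hp a aA; split; first exact: (allP hp).
case: A hs hp aA => //= a0 A' hs _; rewrite inE => /orP[/eqP -> //|aA'].
have tr : transitive (fun a b : R => b < a) by move=> u v w h1 h2; apply: lt_trans h2 h1.
by have := allP (order_path_min tr hs) a aA' => /= /ltW.
Qed.

Lemma hpi_ord (R : realType) N (x : 'rV[R]_N) (pi : 'S_N)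
  (hpi : forall i j : 'I_N, (i < j)%N -> x ord0 (pi j) < x ord0 (pi i)) :
  forall i j : 'I_N, (i <= j)%N -> x ord0 (pi j) <= x ord0 (pi i).
Proof.
move=> i j; rewrite leq_eqVlt => /orP[/eqP h|h]; last exact/ltW/hpi.
by have -> : i = j by apply: val_inj.
Qed.

Lemma compl_shift (R : realType) N (A : seq R) (x : 'rV[R]_N) (pi : 'S_N) (s : 'I_N)
  (xC : arr_compl N A x) (ha : 0 < a1 A)
  (hA : forall a, a \in A -> 0 < a /\ a <= a1 A)
  (hgap : forall p q : 'I_N, (p < s)%N -> (s <= q)%N -> a1 A < x ord0 (pi p) - x ord0 (pi q))
  t : 0 <= t -> arr_compl N A (x - t *: wvec pi s).
Proof.
move=> t0 i j; rewrite !mxE.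
have [hi1 hi2] := xC i j.
have gij := hgap ((pi^-1)%g i) ((pi^-1)%g j); have gji := hgap ((pi^-1)%g j) ((pi^-1)%g i).
rewrite !permKV in gij gji.
case: (leqP s ((pi^-1)%g i)) => si; case: (leqP s ((pi^-1)%g j)) => sj.
- split; [move=> h; rewrite (_ : _ - _ = x ord0 i - x ord0 j); [exact: hi1 | ring]
         |move=> h a aA; rewrite (_ : _ - _ = x ord0 i - x ord0 j); [exact: hi2 | ring]].
- have g := gji sj si; split.
    by move=> _; apply/eqP => E; lra.
  move=> _ a aA; have [a0 aa] := hA a aA; apply/eqP => E; lra.
- have g := gij si sj; split.
    by move=> _; apply/eqP => E; lra.
  move=> _ a aA; have [a0 aa] := hA a aA; apply/eqP => E; lra.
- split; [move=> h; rewrite (_ : _ - _ = x ord0 i - x ord0 j); [exact: hi1 | ring]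
         |move=> h a aA; rewrite (_ : _ - _ = x ord0 i - x ord0 j); [exact: hi2 | ring]].
Qed.

Lemma dot_lin (R : realType) N (u x w y : 'rV[R]_N) t :
  dotv u (x - t *: w - y) = dotv u x - t * dotv u w - dotv u y.
Proof.
rewrite /dotv mulr_sumr -!sumrB; apply: eq_bigr => i _; rewrite !mxE; ring.
Qed.

Lemma lower_bound (R : realType) N (D : set 'rV[R]_N) (x : 'rV[R]_N) (ws : seq 'rV[R]_N)
  (hfree : free ws) (hseg : forall w, w \in ws -> forall t, 0 <= t -> D (x - t *: w))
  (l : nat) : within_tube N D l -> (size ws <= l)%N.
Proof.
move=> [W [hdim [r r0 ht]]]; rewrite -hdim; apply: contraT; rewrite -ltnNge => hlt.
pose b := vbasis W.
pose M : 'M[R]_(size ws, \dim W) := \matrix_(k, j) dotv ws`_k b`_j.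
have hK : kermx M != 0.
  rewrite -mxrank_eq0 mxrank_ker; have := rank_leq_col M; lia.
have [k0 hk0] : exists k0, row k0 (kermx M) != 0.
  apply/existsP; apply: contraR hK => /existsPn H; apply/eqP/row_matrixP => i.
  by rewrite row0; apply/eqP; move: (H i); rewrite negbK.
pose t := row k0 (kermx M).
have ht0 : t *m M = 0 by rewrite -row_mul mulmx_ker row0.
pose u := \sum_(k < size ws) t ord0 k *: ws`_k.
have ub : forall j : 'I_(\dim W), dotv u b`_j = 0.
  move=> j; rewrite /u dot_suml.
  have := congr1 (fun m : 'M[R]_(1, \dim W) => m ord0 j) ht0; rewrite !mxE => E.
  by apply: (etrans _ E); apply: eq_bigr => k _; rewrite !mxE.
have uW : forall y, y \in W -> dotv u y = 0.
  move=> y /coord_vbasis ->; rewrite dotC dot_suml big1 // => j _.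
  by rewrite dotC ub mulr0.
have uw : forall k : 'I_(size ws), dotv u ws`_k = 0.
  move=> k; pose w := ws`_k.
  have wws : w \in ws by rewrite mem_nth.
  pose K := (\sum_(j < N) `|u ord0 j|) * r.
  have hb : forall t, 0 <= t -> `|dotv u x - t * dotv u w| <= K.
    move=> s s0; have [y yW hy] := ht _ (hseg w wws s s0).
    have hy' : \sum_(j < N) ((x - s *: w - y) ord0 j) ^+ 2 <= r ^+ 2.
      by apply: le_trans hy; rewrite le_eqVlt; apply/orP; left; apply/eqP/eq_bigr => j _; rewrite !mxE.
    by have := @dot_bound R N u _ r r0 hy'; rewrite dot_lin (uW y yW) subr0.
  have K0 : 0 <= K by rewrite /K mulr_ge0 ?sumr_ge0 // ltW.
  apply/eqP; apply: contraT => hd.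
  pose s := (`|dotv u x| + K + 1) / `|dotv u w|.
  have s0 : 0 <= s by apply: divr_ge0; [have := normr_ge0 (dotv u x); lra | exact: normr_ge0].
  have e : `|s * dotv u w| = `|dotv u x| + K + 1.
    by rewrite normrM ger0_norm // /s divfK // normr_eq0.
  have tri := ler_normB (dotv u x) (dotv u x - s * dotv u w).
  have e2 : dotv u x - (dotv u x - s * dotv u w) = s * dotv u w by ring.
  rewrite e2 e in tri; have := hb s s0; lra.
have u0 : u = 0.
  apply: dot_self_eq0; rewrite {2}/u dotC dot_suml big1 // => k _.
  by rewrite dotC uw mulr0.
have H := (elimT (@freeP _ _ _ (in_tuple ws)) hfree) (fun i => t ord0 i).
have : t = 0 by apply/rowP => i; rewrite [RHS]mxE; exact: (H u0 i).
by move/eqP; rewrite (negbTE hk0).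
Qed.

Definition Gd {R : realType} {n} (y : 'rV[R]_n.+1) (pi : 'S_n.+1) (k : nat) : R :=
  if k is k'.+1 then Xc y pi k'.+1 - Xc y pi k' else Xc y pi 0.

Lemma Gd_sum (R : realType) n (y : 'rV[R]_n.+1) (pi : 'S_n.+1) (p : 'I_n.+1) :
  y ord0 (pi p) = \sum_(s < n.+1 | (s <= p)%N) Gd y pi s.
Proof.
have H : forall q, Xc y pi q = \sum_(k < q.+1) Gd y pi k.
  elim => [|q IH]; first by rewrite big_ord1.
  by rewrite big_ord_recr /= -IH /Gd; ring.
have -> : y ord0 (pi p) = Xc y pi p by rewrite /Xc inord_val.
rewrite H (big_ord_widen n.+1 (Gd y pi) (ltn_ord p)).
by apply: eq_bigl => s; rewrite ltnS.
Qed.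

Lemma inv_step (R : realType) n (A : seq R) (D : set 'rV[R]_n.+1) (x y : 'rV[R]_n.+1)
  (pi : 'S_n.+1)
  (hpi : forall i j : 'I_n.+1, (i < j)%N -> x ord0 (pi j) < x ord0 (pi i))
  (ha : 0 < a1 A) (aA : a1 A \in A) (cD : connected D) (DC : D `<=` arr_compl n.+1 A)
  (hx : D x) (hy : D y) k : (k < n)%N -> ~~ (a1 A < Xc x pi k - Xc x pi k.+1) ->
  `|Xc y pi k.+1 - Xc y pi k| <= a1 A.
Proof.
move=> kn hg.
have hne : pi (inord k) != pi (inord k.+1) :> 'I_n.+1.
  rewrite (inj_eq perm_inj); apply/eqP => /(congr1 val) /=; rewrite !inordK; lia.
have lt1 : x ord0 (pi (inord k)) - x ord0 (pi (inord k.+1)) < a1 A.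
  rewrite lt_neqAle; rewrite /Xc -leNgt in hg; rewrite hg andbT.
  by have [_ H] := DC _ hx (pi (inord k)) (pi (inord k.+1)); apply: H.
have lt2 : x ord0 (pi (inord k.+1)) - x ord0 (pi (inord k)) < a1 A.
  have := @hpi_nat R n x pi hpi k k.+1 (ltnSn k) kn; rewrite /Xc; lra.
have hne' : pi (inord k.+1) != pi (inord k) :> 'I_n.+1 by rewrite eq_sym.
have h1 := @inv_lt R n.+1 A D x y _ _ cD DC hx hy aA hne lt1.
have h2 := @inv_lt R n.+1 A D x y _ _ cD DC hx hy aA hne' lt2.
rewrite /Xc.
rewrite ler_norml; apply/andP; split; lra.
Qed.

Lemma upper_bound (R : realType) n (A : seq R) (D : set 'rV[R]_n.+1) (x : 'rV[R]_n.+1)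
  (pi : 'S_n.+1)
  (hpi : forall i j : 'I_n.+1, (i < j)%N -> x ord0 (pi j) < x ord0 (pi i))
  (ha : 0 < a1 A) (aA : a1 A \in A) (cD : connected D) (DC : D `<=` arr_compl n.+1 A)
  (hx : D x) (S : pred 'I_n.+1) (hS0 : S ord0)
  (hS : forall k, (k < n)%N -> ~~ S (inord k.+1) -> ~~ (a1 A < Xc x pi k - Xc x pi k.+1)) :
  within_tube n.+1 D (size (map (@wvec R n.+1 pi) (enum S))).
Proof.
set ws := map (@wvec R n.+1 pi) (enum S).
have hfree : free ws := @free_w R n.+1 pi _ (@sorted_enum_ord n.+1 S).
exists <<ws>>%VS; split; first exact/eqP.
set B := n.+1%:R * a1 A.
have B0 : 0 <= B by rewrite /B mulr_ge0 // ltW.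
exists (n.+1%:R * B + 1).
  have : 0 <= n.+1%:R * B by rewrite mulr_ge0.
  lra.
move=> y hy.
pose z := \sum_(s : 'I_n.+1 | S s) Gd y pi s *: (wvec pi s : 'rV[R]_n.+1).
exists z.
  rewrite /z; apply: rpred_sum => s Ss; apply: rpredZ; apply: memv_span.
  by rewrite /ws map_f // mem_enum.
have hp : forall p : 'I_n.+1, `|y ord0 (pi p) - z ord0 (pi p)| <= B.
  move=> p; rewrite Gd_sum /z sum_coord.
  have -> : \sum_(s | S s) Gd y pi s * (wvec pi s : 'rV[R]_n.+1) ord0 (pi p) =
      \sum_(s | S s && (s <= p)%N) Gd y pi s.
    rewrite big_mkcondr /=; apply: eq_bigr => s _; rewrite wvec_pi.
    by case: ifP => _; [exact: mulr1 | exact: mulr0].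
  rewrite (bigID S) /= addrC.
  have -> : \sum_(i < n.+1 | (i <= p)%N && S i) Gd y pi i =
      \sum_(s | S s && (s <= p)%N) Gd y pi s by apply: eq_bigl => s; rewrite andbC.
  rewrite addrK.
  apply: le_trans (ler_norm_sum _ _ _) _.
  apply: le_trans (_ : \sum_(i < n.+1 | (i <= p)%N && ~~ S i) a1 A <= _).
    apply: ler_sum => s /andP[_ nS].
    case: s nS => [[|k] hk] nS /=.
      by move: nS; rewrite (_ : Ordinal hk = ord0) ?hS0 //; apply: val_inj.
    have kn : (k < n)%N by lia.
    have e : (inord k.+1 : 'I_n.+1) = Ordinal hk by apply: val_inj; rewrite /= inordK.
    apply: (@inv_step R n A D x y pi hpi ha aA cD DC hx hy k kn); apply: hS => //; by rewrite e.
  apply: le_trans (_ : \sum_(i < n.+1) a1 A <= _).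
    rewrite [X in _ <= X](bigID (fun i : 'I_n.+1 => (i <= p)%N && ~~ S i)) /= lerDl.
    by apply: sumr_ge0 => i _; apply: ltW.
  by rewrite sumr_const card_ord /B mulr_natl.
apply: le_trans (_ : \sum_(i < n.+1) B ^+ 2 <= _).
  apply: ler_sum => i _.
  have := hp ((pi^-1)%g i); rewrite permKV => h.
  set t := y ord0 i - z ord0 i in h *.
  have e : `|t| ^+ 2 = t ^+ 2 by rewrite real_normK ?num_real.
  have n0 : 0 <= `|t| by [].
  nra.
rewrite sumr_const card_ord -[B ^+ 2 *+ n.+1]mulr_natl.
have N1 : 1 <= n.+1%:R :> R by rewrite ler1n.
have q1 : 0 <= (n.+1%:R - 1) * (n.+1%:R * B ^+ 2).
  by apply: mulr_ge0; [lra | apply: mulr_ge0; [lra | exact: sqr_ge0]].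
have q0 : 0 <= n.+1%:R * B by rewrite mulr_ge0.
have q3 : (n.+1%:R * B + 1) ^+ 2 = (n.+1%:R - 1) * (n.+1%:R * B ^+ 2) + n.+1%:R * B ^+ 2 + 2 * (n.+1%:R * B) + 1 by ring.
rewrite q3; lra.

Qed.

Theorem theorem3p2 (R : realType) (n : nat) (A : seq R)
  (hn : (1 <= n)%N)
  (hA0 : A != [::]) (hAsort : sorted (fun a b => b < a) A)
  (hApos : all (fun a => 0 < a) A)
  (D : set 'rV[R]_n) (hD : is_region n A D)
  (x : 'rV[R]_n) (hx : D x) (pi : 'S_n)
  (hpi : forall i j : 'I_n, (i < j)%N -> x ord0 (pi j) < x ord0 (pi i)) :
  level n D (ell n (D1 n A x pi)) /\
  level n D (addn 1 #|[pred k : 'I_n | [exists k' : 'I_n,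
                    (k'.+1 == k :> nat) &&
                    (a1 A < x ord0 (pi k') - x ord0 (pi k))]]|).
Proof.
case: n hn D hD x hx pi hpi => [//|n] _ D hD x hx pi hpi.
have hAb := @A_bounds R A hAsort hApos.
have aA := @a1_in R A hA0.
have ha : 0 < a1 A := (hAb _ aA).1.
have [x0 _ Deq] := hD.
have cD : connected D by rewrite Deq; exact: component_connected.
have DC : D `<=` arr_compl n.+1 A by rewrite Deq; exact: connected_component_sub.
have xC := DC x hx.
set P' := [pred k : 'I_n.+1 | [exists k' : 'I_n.+1,
                    (k'.+1 == k :> nat) &&
                    (a1 A < x ord0 (pi k') - x ord0 (pi k))]].
pose S := [pred k : 'I_n.+1 | (k == ord0) || P' k].
have hS0 : S ord0 by rewrite /S /= ?eqxx.
have hsize : size (map (@wvec R n.+1 pi) (enum S)) = addn 1 #|P'|.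
  rewrite size_map -cardE (cardD1 ord0) (_ : ord0 \in S) //; congr addn.
  apply: eq_card => k; rewrite !inE /S /=.
  case: (eqVneq k ord0) => [->|] //=.
  by symmetry; apply/negbTE/existsPn.
have hS : forall k, (k < n)%N -> ~~ S (inord k.+1) ->
    ~~ (a1 A < Xc x pi k - Xc x pi k.+1).
  move=> k kn; apply: contra => hg; rewrite /S /= orbC; apply/orP; left.
  apply/existsP; exists (inord k); rewrite !inordK; [|lia|lia].
  by rewrite eqxx.
have hlev : level n.+1 D (addn 1 #|P'|).
  split.
    rewrite -hsize; exact: (@upper_bound R n A D x pi hpi ha aA cD DC hx S hS0 hS).
  move=> l' ht; rewrite -hsize; apply: (@lower_bound R n.+1 D x _ _ _ l' ht).
    exact: (@free_w R n.+1 pi _ (@sorted_enum_ord n.+1 S)).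
  move=> w /mapP [s]; rewrite mem_enum => Ss ->.
  apply: (@segment_in R n.+1 A D x _ hD hx).
  apply: (@compl_shift R n.+1 A x pi s xC ha hAb).
  move=> p q ps sq.
  move: Ss; rewrite /S /= => /orP[/eqP s0|]; first by move: ps; rewrite s0.
  move=> /existsP [k' /andP [/eqP hk hg]].
  have h1 := @hpi_ord R n.+1 x pi hpi p k' ltac:(rewrite -ltnS hk //).
  have h2 := @hpi_ord R n.+1 x pi hpi s q sq.
  lra.
split => //.
by rewrite ell_count.
Qed.
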